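(* Let $n\ge 2$ and let $R$ be the complex Leibniz algebra with basis $\{h,e_1,\dots,e_n\}$ and nonzero products $[e_i,e_1]=e_{i+1}$ ($1\le i\le n-1$), $[h,e_1]=-e_1$, $[e_i,h]=ie_i$ ($1\le i\le n$). Then every biderivation of $R$ is inner, i.e. of the form $(-\mathrm{ad}_x,\mathrm{Ad}_x)$ for some $x\in R$.
   Context: Leibniz algebras are right Leibniz over $\mathbb C$: $[x,[y,z]]=[[x,y],z]-[[x,z],y]$. Unlisted products are zero. A derivation is a linear $d$ with $d([x,y])=[d(x),y]+[x,d(y)]$; an anti-derivation is a linear $D$ with $D([x,y])=[D(x),y]-[D(y),x]$; a biderivation is a pair $(d,D)$ of a derivation and an anti-derivation with $[x,d(y)]=[x,D(y)]$ for all $x,y$. For $x\in R$, $\mathrm{ad}_x(y)=[y,x]$ and $\mathrm{Ad}_x(y)=[x,y]$; the biderivation $(-\mathrm{ad}_x,\mathrm{Ad}_x)$ is called inner. *)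

(* Defs.v *)
From HB Require Import structures.
From mathcomp Require Import all_boot all_order all_algebra.
From mathcomp Require Import complex.
From mathcomp Require Import Rstruct.
Set Implicit Arguments. Unset Strict Implicit. Unset Printing Implicit Defensive.
Import Order.TTheory GRing.Theory Num.Theory.
Local Open Scope ring_scope.

Definition CC : Type := (Rdefinitions.R)[i].

Section Leib.
Variable F : fieldType.

Definition is_derivation {V : lmodType F} (br : V -> V -> V) (d : V -> V) :=
  forall x y, d (br x y) = br (d x) y + br x (d y).

Definition is_antiderivation {V : lmodType F} (br : V -> V -> V) (D : V -> V) :=
  forall x y, D (br x y) = br (D x) y - br (D y) x.

Definition is_biderivation {V : lmodType F} (br : V -> V -> V)
  (d D : {linear V -> V}) :=
  [/\ is_derivation br d, is_antiderivation br D &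
      forall x y, br x (d y) = br x (D y)].

(* ad_x y = [y,x], Ad_x y = [x,y]; inner biderivation (-ad_x, Ad_x). *)
Definition is_inner_biderivation {V : lmodType F} (br : V -> V -> V)
  (d D : V -> V) :=
  exists x : V, forall y, d y = - br y x /\ D y = br x y.

(* The algebra R of the theorem: basis h = b_0, e_i = b_i (1 <= i <= n),
   realised as row vectors of length n+1. *)
Definition bvec (n k : nat) : 'rV[F]_(n.+1) := \row_(j < n.+1) ((j : nat) == k)%:R.

(* products of basis vectors; note bvec n (n+1) = 0, so [e_n,e_1] = 0. *)
Definition br_basis (n : nat) (a b : 'I_(n.+1)) : 'rV[F]_(n.+1) :=
  if (a != 0%N :> nat) && (b == 1%N :> nat) then @bvec n (a.+1)
  else if (a == 0%N :> nat) && (b == 1%N :> nat) then - @bvec n 1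
  else if (a != 0%N :> nat) && (b == 0%N :> nat) then (a : nat)%:R *: @bvec n a
  else 0.

Definition brR (n : nat) (x y : 'rV[F]_(n.+1)) : 'rV[F]_(n.+1) :=
  \sum_(a < n.+1) \sum_(b < n.+1) (x 0 a * y 0 b) *: @br_basis n a b.

End Leib.

(* Main.v *)
Require Import Defs.
From HB Require Import structures.
From mathcomp Require Import all_boot all_order all_algebra.
From mathcomp Require Import complex.
From mathcomp Require Import Rstruct.
From mathcomp Require Import ring.
Set Implicit Arguments. Unset Strict Implicit. Unset Printing Implicit Defensive.
Import GRing.Theory.
Local Open Scope ring_scope.

Lemma zmod4 (W : zmodType) (A B C E : W) : A - B - (C - E) = (A - C) - (B - E).
Proof. by rewrite !opprB !addrA -!(addrAC _ E) addrAC. Qed.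
Lemma zmod4' (W : zmodType) (a b c e : W) : (a + b) + (c + e) = (a + e) + (b + c).
Proof. by rewrite [RHS]addrACA (addrC e). Qed.

Section Gen.
Variable F : fieldType.

Lemma sum_delta m (c : nat -> F) k :
  \sum_(i < m) ((i : nat) == k)%:R * c i = (k < m)%:R * c k.
Proof.
rewrite -(big_mkord xpredT (fun i => (i == k)%:R * c i)).
elim: m => [|m IH]; first by rewrite big_geq // mul0r.
rewrite big_nat_recr //= IH.
have [->|ne] := eqVneq k m; first by rewrite ltnn leqnn mul0r add0r.
by rewrite mul0r addr0 ltnS [in RHS]leq_eqVlt (negbTE ne).
Qed.

Variable n : nat.
Hypothesis hn1 : (1 < n.+1)%N.
Local Notation N := n.+1.
Local Notation V := 'rV[F]_N.

Lemma sum2_delta (G : nat -> nat -> F) p q :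
  \sum_(a < N) \sum_(b < N) G a b * (((a:nat) == p)%:R * ((b:nat) == q)%:R)
  = (p < N)%:R * ((q < N)%:R * G p q).
Proof.
rewrite (eq_bigr (fun a : 'I_N => \sum_(b<N) ((b:nat)==q)%:R * (G a b * ((a:nat)==p)%:R))); last first.
  by move=> a _; apply: eq_bigr => b _; ring.
under eq_bigr => a _ do rewrite (@sum_delta N (fun b => G a b * ((a:nat) == p)%:R)).
rewrite (eq_bigr (fun a : 'I_N => ((a:nat)==p)%:R * ((q < N)%:R * G a q))); last first.
  by move=> a _; ring.
by rewrite (@sum_delta N (fun a => (q < N)%:R * G a q)).
Qed.

Lemma br_basis_co (a b j : 'I_N) : @br_basis F n a b 0 j =
  ((a:nat)==j)%:R*((b:nat)==0%N)%:R * (j:nat)%:R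
  + ((a:nat)==(j:nat).-1)%:R*((b:nat)==1%N)%:R*(2<=j)%N%:R
  - ((a:nat)==0%N)%:R*((b:nat)==1%N)%:R*((j:nat)==1%N)%:R.
Proof.
case: a b j => [a Ha] [b Hb] [j Hj]; rewrite /br_basis /bvec /=.
case: a Ha => [|[|a]] Ha; case: b Hb => [|[|b]] Hb; case: j Hj => [|[|j]] Hj;
  rewrite /= ?mxE /= ?scaler0 ?mxE //=; try ring.
all: rewrite ?eqSS ?[(a == j)%N]eq_sym ?[(0 == j)%N]eq_sym ?[(a.+1 == j)%N]eq_sym.
- ring.
- by case: (eqVneq j a) => [->|ne]; rewrite ?eqxx ?(negbTE ne) /=; ring.
- ring.
Qed.

Definition co (v : V) (k : nat) : F := if (k < N)%N then v 0 (inord k) else 0.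
Definition Lc (x : V) (j : nat) : F := (2 <= j)%N%:R * co x j.-1 - (j == 1)%N%:R * co x 0.

Lemma co_ord (v : V) (j : 'I_N) : co v j = v 0 j.
Proof. by rewrite /co ltn_ord inord_val. Qed.

Lemma brR_co (x y : V) (j : 'I_N) :
  @brR F n x y 0 j = co y 1 * Lc x j + co y 0 * ((j:nat)%:R * co x j).
Proof.
rewrite /brR summxE.
under eq_bigr => a _ do rewrite summxE.
under eq_bigr => a _ do under eq_bigr => b _ do rewrite mxE br_basis_co -!co_ord.
transitivity (\sum_(a < N) \sum_(b < N) (co x a * co y b * (j:nat)%:R) * (((a:nat)==j)%:R * ((b:nat)==0%N)%:R)
  + \sum_(a < N) \sum_(b < N) (co x a * co y b * (2<=j)%N%:R) * (((a:nat)==(j:nat).-1)%:R * ((b:nat)==1%N)%:R)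
  - \sum_(a < N) \sum_(b < N) (co x a * co y b * ((j:nat)==1%N)%:R) * (((a:nat)==0%N)%:R * ((b:nat)==1%N)%:R)).
  rewrite -big_split -sumrB /=; apply: eq_bigr => a _.
  rewrite -big_split -sumrB /=; apply: eq_bigr => b _; ring.
rewrite !(sum2_delta (fun a b => co x a * co y b * _)).
have hj1 : ((j:nat).-1 < N)%N by apply: leq_ltn_trans (leq_pred _) (ltn_ord j).
rewrite ltn_ord hj1 hn1 /= /Lc; ring.
Qed.

Lemma co_brR k (hk : (k < N)%N) (x y : V) :
  co (@brR F n x y) k = co y 1 * Lc x k + co y 0 * (k%:R * co x k).
Proof.
have := brR_co x y (inord k); rewrite inordK // => <-.
by rewrite {1}/co hk.
Qed.

Lemma co_inj (u v : V) : (forall k, (k < N)%N -> co u k = co v k) -> u = v.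
Proof. by move=> H; apply/rowP => j; rewrite -!co_ord H. Qed.

Lemma coD (u v : V) k : co (u + v) k = co u k + co v k.
Proof. by rewrite /co; case: ifP; rewrite ?mxE ?addr0. Qed.
Lemma coN (u : V) k : co (- u) k = - co u k.
Proof. by rewrite /co; case: ifP; rewrite ?mxE ?oppr0. Qed.
Lemma coZ a (u : V) k : co (a *: u) k = a * co u k.
Proof. by rewrite /co; case: ifP; rewrite ?mxE ?mulr0. Qed.
Lemma co0 k : co (0 : V) k = 0.
Proof. by rewrite /co; case: ifP; rewrite ?mxE. Qed.
Lemma co_bvec m k : (k < N)%N -> co (@bvec F n m) k = (k == m)%:R.
Proof. by move=> hk; rewrite /co hk mxE inordK. Qed.

Local Notation br := (@brR F n).
Ltac cot := apply: co_inj => ? ?; rewrite ?coD ?coN ?coZ ?co0 !co_brR // /Lc ?coD ?coN ?coZ ?co0; ring.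

Lemma brRDl u v w : br (u + v) w = br u w + br v w. Proof. cot. Qed.
Lemma brRDr u v w : br u (v + w) = br u v + br u w. Proof. cot. Qed.
Lemma brRNl u w : br (- u) w = - br u w. Proof. cot. Qed.
Lemma brRNr u w : br u (- w) = - br u w. Proof. cot. Qed.
Lemma brRZl a u w : br (a *: u) w = a *: br u w. Proof. cot. Qed.
Lemma brRZr a u w : br u (a *: w) = a *: br u w. Proof. cot. Qed.
Lemma brR0l w : br 0 w = 0. Proof. cot. Qed.
Lemma brR0r w : br w 0 = 0. Proof. cot. Qed.

Lemma leib u v w : br (br u v) w = br u (br v w) + br (br u w) v.
Proof.
apply: co_inj => k hk.
have hk1 : (k.-1 < N)%N by apply: leq_ltn_trans (leq_pred _) hk.
rewrite coD !(co_brR hk) /Lc !(co_brR hk1) !(co_brR (ltn0Sn n)) !(co_brR hn1) /Lc.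
case: k hk hk1 => [|[|[|k]]] hk hk1 /=; rewrite ?mulrS; ring.
Qed.
End Gen.

Section Main.
Variable F : fieldType.
Variable n : nat.
Hypothesis hn : (2 <= n)%N.
Hypothesis hchar : forall k, (0 < k)%N -> (k%:R : F) != 0.
Local Notation N := n.+1.
Local Notation V := 'rV[F]_N.
Local Notation br := (@brR F n).
Local Notation co := (@co F n).
Local Notation Lc := (@Lc F n).
Let hn1 : (1 < N)%N := ltnW hn.
Local Notation H := (@bvec F n 0).
Local Notation E := (@bvec F n 1).

Lemma co_bv m k : co (@bvec F n m) k = ((k == m) && (k < N)%N)%:R.
Proof. by rewrite /co; case: ifP => hk; rewrite ?mxE ?inordK ?hk ?andbT ?andbF. Qed.

Lemma lin_solve (c u v A B : F) : c != 0 -> A = B -> A - B = c * (u - v) -> u = v.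
Proof.
move=> hc eAB e; apply/eqP; rewrite -subr_eq0; move: e; rewrite eAB subrr => /esym/eqP.
by rewrite mulf_eq0 (negbTE hc).
Qed.

Variables d D : {linear V -> V}.
Hypothesis hb : is_biderivation br d D.

Lemma F1 y : co (d y) 1 = co (D y) 1 /\ co (d y) 0 = co (D y) 0.
Proof.
case: hb => _ _ h3.
have e1 := congr1 (co ^~ 1%N) (h3 H y).
have e0 := congr1 (co ^~ 1%N) (h3 E y).
rewrite !co_brR // /Lc !co_bv /= ?hn1 in e1 e0.
split.
- by apply: (lin_solve (c:=-1) _ e1); [rewrite oppr_eq0 oner_eq0 | ring].
- by apply: (lin_solve (c:=1) _ e0); [rewrite oner_eq0 | rewrite /=; ring].
Qed.

Ltac csimp := rewrite ?coD ?coN ?coZ ?co0 ?co_brR // /Lc ?co_bv /= ?hn1 ?coD ?coN ?coZ ?co0.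

Lemma brHH : br H H = 0.
Proof. apply: co_inj => // k hk; csimp; case: k hk => [|k] hk /=; ring. Qed.

Lemma brEH : br E H = E.
Proof. apply: co_inj => // k hk; csimp; case: k hk => [|[|k]] hk /=; rewrite ?hk; ring. Qed.

Lemma dHH k : (2 <= k)%N -> (k < N)%N -> co (d H) k = 0.
Proof.
case: hb => hd _ _ hk2 hk.
have e := congr1 (co ^~ k) (hd H H).
rewrite brHH linear0 /= in e; move: e; csimp => e.
case: k hk2 hk e => [|[|k]] // _ hk e.
apply: (lin_solve (c:=- k.+2%:R) _ e); first by rewrite oppr_eq0 hchar.
rewrite /=; ring.
Qed.

Let hn2 : (2 < N)%N := hn.

Lemma eEH k : co (d E) k = co (br (d E) H) k + co (br E (d H)) k.
Proof. by case: hb => hd _ _; rewrite -coD -hd brEH. Qed.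

Lemma dE0 : co (d E) 0 = 0.
Proof.
have := eEH 0; csimp => e.
by apply: (lin_solve (c:=1) _ e); [rewrite oner_eq0 | rewrite /=; ring].
Qed.

Lemma dH0 : co (d H) 0 = 0.
Proof.
have := eEH 1; csimp => e.
by apply: (lin_solve (c:=-1) _ e); [rewrite oppr_eq0 oner_eq0 | rewrite /=; ring].
Qed.

Lemma dE2 : co (d E) 2 = - co (d H) 1.
Proof.
have := eEH 2; csimp; rewrite ?hn2 => e.
by apply: (lin_solve (c:=-1) _ e); [rewrite oppr_eq0 oner_eq0 | rewrite /=; ring].
Qed.

Lemma dE3 k : (k.+3 < N)%N -> co (d E) k.+3 = 0.
Proof.
move=> hk; have := eEH k.+3; csimp => e.
apply: (lin_solve (c:=- k.+2%:R) _ e); first by rewrite oppr_eq0 hchar.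
rewrite /=; ring.
Qed.

Lemma DE k : (k.+2 < N)%N -> co (D E) k.+2 * k.+1%:R = co (D H) k.+1.
Proof.
move=> hk; case: hb => _ ha _.
have := congr1 (co ^~ k.+2) (ha E H); rewrite brEH /=.
rewrite coD coN; csimp => e.
apply: (lin_solve (c:=-1) _ e); first by rewrite oppr_eq0 oner_eq0.
rewrite /=; ring.
Qed.

Definition xx : V := \row_(k < N) (if (k:nat) == 0%N then - co (d E) 1 else co (D H) k / (k:nat)%:R).

Lemma xx0 : co xx 0 = - co (d E) 1.
Proof. by rewrite /co /= mxE inordK. Qed.

Lemma xxk k : (0 < k)%N -> (k < N)%N -> co xx k = co (D H) k / k%:R.
Proof. move=> k0 hk; by rewrite {1}/co hk mxE inordK // (negbTE (lt0n_neq0 k0)). Qed.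

Lemma G1H : d H + br H xx = 0.
Proof.
apply: co_inj => // k hk; csimp.
case: k hk => [|[|k]] hk.
- rewrite dH0 /=; ring.
- rewrite (xxk (ltn0Sn 0) hn1) (proj1 (F1 H)) /=; rewrite divr1; ring.
- rewrite dHH //=; ring.
Qed.

Lemma G1E : d E + br E xx = 0.
Proof.
apply: co_inj => // k hk; csimp.
case: k hk => [|[|[|k]]] hk.
- rewrite dE0 /=; ring.
- rewrite xx0 /= hn1 /=; ring.
- rewrite dE2 (xxk (ltn0Sn 0) hn1) (proj1 (F1 H)) /= ?hn1 ?hn2 /=; rewrite divr1; ring.
- rewrite dE3 //=; ring.
Qed.

Lemma G2H : D H - br xx H = 0.
Proof.
apply: co_inj => // k hk; csimp.
case: k hk => [|k] hk.
- rewrite -(proj2 (F1 H)) dH0 /=; ring.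
- rewrite (xxk (ltn0Sn k) hk) /= [_%:R * (_ / _)]mulrC divfK ?hchar //; ring.
Qed.

Lemma G2E : D E - br xx E = 0.
Proof.
apply: co_inj => // k hk; csimp.
case: k hk => [|[|k]] hk.
- rewrite -(proj2 (F1 E)) dE0 /=; ring.
- rewrite xx0 -(proj1 (F1 E)) /=; ring.
- rewrite (xxk (ltn0Sn k) (ltnW hk)) /= -(DE hk) mulfK ?hchar //; ring.
Qed.

Lemma bvecS k : (0 < k)%N -> br (@bvec F n k) E = @bvec F n k.+1.
Proof.
move=> k0; apply: co_inj => // j hj; csimp.
case: j hj => [|[|j]] hj /=.
- ring.
- by case: k k0 => // k _ /=; ring.
- rewrite hj (ltnW hj) eqSS /=; ring.
Qed.

Lemma G1br u v : d (br u v) + br (br u v) xx = br (d u + br u xx) v + br u (d v + br v xx).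
Proof.
case: hb => hd _ _; rewrite hd leib // brRDl // brRDr //.
exact: zmod4'.
Qed.

Lemma G2br u v : D (br u v) - br xx (br u v) = br (D u - br xx u) v - br (D v - br xx v) u.
Proof.
case: hb => _ ha _.
have hX : br xx (br u v) = br (br xx u) v - br (br xx v) u by rewrite leib // addrK.
by rewrite ha hX !brRDl // !brRNl // zmod4.
Qed.

Lemma G1all k : (k < N)%N -> d (@bvec F n k) + br (@bvec F n k) xx = 0.
Proof.
elim: k => [|k IH] hk; first exact: G1H.
case: k IH hk => [|k] IH hk; first exact: G1E.
rewrite -(bvecS (ltn0Sn k)) G1br IH ?G1E ?brR0l ?brR0r ?addr0 //; exact: ltnW.
Qed.

Lemma G2all k : (k < N)%N -> D (@bvec F n k) - br xx (@bvec F n k) = 0.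
Proof.
elim: k => [|k IH] hk; first exact: G2H.
case: k IH hk => [|k] IH hk; first exact: G2E.
rewrite -(bvecS (ltn0Sn k)) G2br IH ?G2E ?brR0l ?brR0r ?subr0 //; exact: ltnW.
Qed.

Lemma bvec_e (j : 'I_N) : 'e_j = @bvec F n j :> V.
Proof. by apply/rowP => k; rewrite !mxE eqxx. Qed.

Lemma d_eq y : d y = - br y xx.
Proof.
apply/eqP; rewrite -addr_eq0.
rewrite {1 2}(row_sum_delta y) linear_sum.
rewrite (big_morph (fun u => br u xx) (fun u v => brRDl hn1 u v xx) (brR0l hn1 xx)) -big_split /=.
apply/eqP; apply: big1 => j _.
by rewrite linearZ /= brRZl // -scalerDr bvec_e G1all // scaler0.
Qed.

Lemma D_eq y : D y = br xx y.
Proof.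
apply/eqP; rewrite -subr_eq0.
rewrite {1 2}(row_sum_delta y) linear_sum.
rewrite (big_morph (fun u => br xx u) (fun u v => brRDr hn1 xx u v) (brR0r hn1 xx)) -sumrB /=.
apply/eqP; apply: big1 => j _.
by rewrite linearZ /= brRZr // -scalerBr bvec_e G2all // scaler0.
Qed.

Lemma main_gen : is_inner_biderivation br d D.
Proof. by exists xx => y; split; [apply: d_eq | apply: D_eq]. Qed.
End Main.

Theorem mainTheorem9 (n : nat) (hn : (2 <= n)%N)
  (d D : {linear 'rV[CC]_(n.+1) -> 'rV[CC]_(n.+1)}) :
  is_biderivation (@brR _ n) d D ->
  is_inner_biderivation (@brR _ n) d D.
Proof.
move=> hb; apply: (main_gen hn _ hb) => k hk.
by rewrite Num.Theory.pnatr_eq0 -lt0n.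
Qed.
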